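(* Let $\Sigma,\Delta$ be alphabets and $\varphi:\Delta\to2^{\Sigma^*}$ a regular language substitution such that $\varepsilon\in\varphi(\delta)$ for all $\delta\in\Delta$. Then for each $w\in\Delta^+$ and each $v\in S(\varphi(w))$ there exists $\delta\in\Delta$ such that $v\in S(\varphi(\delta))$.
   Context: A regular language substitution is a map $\varphi:\Delta\to2^{\Sigma^*}$ with each $\varphi(\delta)$ regular, extended to words by $\varphi(\delta\cdot w)=\varphi(\delta)\cdot\varphi(w)$. For a language $L\subseteq\Sigma^*$, the set of shortest nonempty words is $S(L)=\{w\in L\setminus\{\varepsilon\}\mid \text{there is no } w'\in L\setminus\{\varepsilon\} \text{ with } |w'|<|w|\}$. *)

(* Defs.v *)
From mathcomp Require Import all_boot.
Set Implicit Arguments. Unset Strict Implicit. Unset Printing Implicit Defensive.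

Definition lang (Sigma : finType) := seq Sigma -> Prop.

Inductive regex (Sigma : finType) : Type :=
| Re_void : regex Sigma
| Re_eps : regex Sigma
| Re_char : Sigma -> regex Sigma
| Re_plus : regex Sigma -> regex Sigma -> regex Sigma
| Re_conc : regex Sigma -> regex Sigma -> regex Sigma
| Re_star : regex Sigma -> regex Sigma.

Definition conc (Sigma : finType) (L1 L2 : lang Sigma) : lang Sigma :=
  fun v => exists v1 v2, v = v1 ++ v2 /\ L1 v1 /\ L2 v2.

Inductive star (Sigma : finType) (L : lang Sigma) : lang Sigma :=
| star_nil : star L [::]
| star_cons : forall v1 v2, L v1 -> star L v2 -> star L (v1 ++ v2).

Fixpoint re_lang (Sigma : finType) (r : regex Sigma) : lang Sigma :=
  match r with
  | Re_void => fun _ => False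
  | Re_eps => fun v => v = [::]
  | Re_char a => fun v => v = [:: a]
  | Re_plus r1 r2 => fun v => re_lang r1 v \/ re_lang r2 v
  | Re_conc r1 r2 => conc (re_lang r1) (re_lang r2)
  | Re_star r1 => star (re_lang r1)
  end.

Definition regular (Sigma : finType) (L : lang Sigma) : Prop :=
  exists r : regex Sigma, forall v, L v <-> re_lang r v.

Fixpoint subst_word (Sigma Delta : finType) (phi : Delta -> lang Sigma)
  (w : seq Delta) : lang Sigma :=
  match w with
  | [::] => fun v => v = [::]
  | d :: w' => conc (phi d) (subst_word phi w')
  end.

Definition shortest (Sigma : finType) (L : lang Sigma) : lang Sigma :=
  fun v => L v /\ v <> [::] /\
    ~ (exists v', L v' /\ v' <> [::] /\ size v' < size v).

(* Main.v *)
Require Import Defs.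
From mathcomp Require Import all_boot.
From mathcomp Require Import zify.

Lemma subE (Sigma Delta : finType) (phi : Delta -> lang Sigma) :
  (forall d, phi d [::]) -> forall w, subst_word phi w [::].
Proof. move=> H0; elim=> [//|d w IH] /=; by exists [::], [::]. Qed.

Lemma subA (Sigma Delta : finType) (phi : Delta -> lang Sigma) :
  (forall d, phi d [::]) -> forall w d u, d \in w -> phi d u -> subst_word phi w u.
Proof.
move=> H0; elim=> [//|d' w IH] d u /=; rewrite in_cons => /orP [/eqP -> | Hd] Hu.
  by exists u, [::]; rewrite cats0; split=> //; split=> //; apply: subE.
exists [::], u; split=> //; split=> //; exact: IH Hd Hu.
Qed.

Lemma subB (Sigma Delta : finType) (phi : Delta -> lang Sigma) w v :
  subst_word phi w v -> v <> [::] ->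
  exists d a u b, d \in w /\ phi d u /\ u <> [::] /\ v = a ++ u ++ b.
Proof.
elim: w v => [|d w IH] v /=; first by move=> ->.
move=> [v1 [v2 [-> [H1 H2]]]] Hne.
case: v1 H1 Hne => [|x v1] H1 Hne.
  have [d' [a [u [b [Hd [Hu [Hn Hv]]]]]]] := IH _ H2 Hne.
  by exists d', a, u, b; rewrite in_cons Hd orbT.
by exists d, [::], (x :: v1), v2; rewrite in_cons eqxx.
Qed.

Theorem lemma1 (Sigma Delta : finType) (phi : Delta -> lang Sigma) :
  (forall d, regular (phi d)) ->
  (forall d, phi d [::]) ->
  forall (w : seq Delta), w <> [::] ->
  forall v, shortest (subst_word phi w) v ->
  exists d : Delta, shortest (phi d) v.
Proof.
move=> _ H0 w _ v [Hv [Hne Hmin]].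
have [d [a [u [b [Hd [Hu [Hn Hvab]]]]]]] := @subB _ _ phi w v Hv Hne.
have Hle : size v <= size u.
  rewrite leqNgt; apply/negP => Hlt; apply: Hmin; exists u; split=> //.
  exact: (@subA _ _ phi H0 _ _ _ Hd) Hu.
have Ha : size a = 0 /\ size b = 0.
  by move: Hle; rewrite Hvab !size_cat; lia.
case: Ha => /size0nil Ha /size0nil Hb.
move: Hvab; rewrite Ha Hb /= cats0 => Hvu; subst u.
exists d; split=> //; split=> //.
move=> [v' [Hv' [Hn' Hs]]]; apply: Hmin; exists v'; split=> //.
exact: (@subA _ _ phi H0 _ _ _ Hd) Hv'.
Qed.
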